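(* Consider the system $\dot v_1=-v_1^2-v_2$, $\dot v_2=-v_1v_2+v_1$ with initial data $(v_1(0),v_2(0))\in\mathbb{R}^2$. Its solution blows up in finite positive time if and only if $1-2v_2(0)\le v_1(0)^2$.
   Context: This is the extended system $\dot{\mathbf v}=-v_1\mathbf v+Q\mathbf v$ with $Q=\begin{pmatrix}0&-1\\1&0\end{pmatrix}$ (eigenvalues $\pm i$), governing $(v_1,v_2)=(V_x,E_x)$ along characteristics for the cold plasma case of the pressureless Euler–Poisson system $V_t+VV_x=kE-\gamma V$, $E_t+VE_x=NV$ with $k=-1$, $N=1$, $\gamma=0$. *)

(* Defs.v *)
From Stdlib Require Import Reals.
From Coquelicot Require Import Coquelicot.
Open Scope R_scope.

Definition is_solution_on (T x1 x2 : R) (v1 v2 : R -> R) : Prop :=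
  v1 0 = x1 /\ v2 0 = x2 /\
  filterlim v1 (at_right 0) (locally x1) /\
  filterlim v2 (at_right 0) (locally x2) /\
  (forall t, 0 < t < T ->
     is_derive v1 t (- (v1 t) ^ 2 - v2 t) /\
     is_derive v2 t (- (v1 t * v2 t) + v1 t)).

(** The solution with initial data (x1, x2) blows up in finite positive time:
    there is a finite T > 0 and a solution on [0, T) which is unbounded
    on [0, T) (i.e. the maximal forward existence time is finite). *)
Definition blows_up_in_finite_time (x1 x2 : R) : Prop :=
  exists T : R, 0 < T /\
    exists v1 v2 : R -> R, is_solution_on T x1 x2 v1 v2 /\
      ~ (exists M : R, forall t, 0 <= t < T -> Rabs (v1 t) + Rabs (v2 t) <= M).

(* Main.v *)
Require Import Defs.
From Stdlib Require Import Reals Lra Psatz Classical.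
From Coquelicot Require Import Coquelicot.
Open Scope R_scope.

Lemma rc_eps (f : R -> R) s l : filterlim f (at_right s) (locally l) ->
  forall eps, 0 < eps -> exists e, 0 < e /\ forall u, s < u < s + e -> Rabs (f u - l) < eps.
Proof.
  intros H eps He.
  destruct (proj1 (filterlim_locally f l) H (mkposreal eps He)) as [d Hd].
  exists d; split; [apply cond_pos|].
  intros u Hu. apply (Hd u); [|lra].
  unfold ball; simpl; unfold AbsRing_ball, abs, minus, plus, opp; simpl.
  rewrite Rabs_right; lra.
Qed.

Lemma cont_eps (f : R -> R) x : continuous f x ->
  forall eps, 0 < eps -> exists e, 0 < e /\ forall u, Rabs (u - x) < e -> Rabs (f u - f x) < eps.
Proof.
  intros H eps He.
  destruct (proj1 (filterlim_locally f (f x)) H (mkposreal eps He)) as [d Hd].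
  exists d; split; [apply cond_pos|].
  intros u Hu. apply (Hd u). exact Hu.
Qed.

Lemma deriv_eps (f : R -> R) x l : is_derive f x l ->
  forall eps, 0 < eps -> exists e, 0 < e /\ forall u, Rabs (u - x) < e -> Rabs (f u - f x) < eps.
Proof.
  intros H. apply (cont_eps f x). apply (ex_derive_continuous (V:=R_NormedModule) f x). exists l; exact H.
Qed.

Lemma cont_rc (f : R -> R) x : continuous f x -> filterlim f (at_right x) (locally (f x)).
Proof.
  intros H. eapply filterlim_filter_le_1; [|exact H].
  intros P [d Hd]. exists d. intros y Hy _. apply Hd; exact Hy.
Qed.
Definition ceps (f : R -> R) x := forall eps, 0 < eps -> exists e, 0 < e /\
   forall u, Rabs (u - x) < e -> Rabs (f u - f x) < eps.

Lemma lub_below (E : R -> Prop) S u : is_lub E S -> u < S -> exists s, E s /\ u < s.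
Proof.
  intros [Hub Hl] Hu. apply NNPP; intro Hn.
  assert (is_upper_bound E u).
  { intros s Hs. destruct (Rle_lt_dec s u) as [h|h]; auto. exfalso; apply Hn; eauto. }
  specialize (Hl u H). lra.
Qed.

Lemma first_zero (f : R -> R) t0 : (forall x, ceps f x) -> 0 < f 0 -> 0 < t0 -> f t0 <= 0 ->
  exists T, 0 < T /\ f T <= 0 /\ forall t, 0 <= t < T -> 0 < f t.
Proof.
  intros Hc H0 Ht0 Hf0.
  set (E := fun s => 0 <= s <= t0 /\ forall u, 0 <= u <= s -> 0 < f u).
  assert (HE0 : E 0). { split; [lra|]. intros u Hu. replace u with 0 by lra. exact H0. }
  assert (Hb : bound E). { exists t0. intros s [Hs _]. lra. }
  destruct (completeness E Hb (ex_intro _ 0 HE0)) as [S HS].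
  assert (HS0 : 0 <= S) by (apply (proj1 HS); exact HE0).
  assert (HSt : S <= t0). { apply (proj2 HS). intros s [Hs _]. lra. }
  assert (Hbel : forall t, 0 <= t < S -> 0 < f t).
  { intros t Ht. destruct (lub_below E S t HS (proj2 Ht)) as [s [[_ Hs] Hts]]. apply Hs; lra. }
  assert (HSpos : 0 < S).
  { destruct (Hc 0 (f 0) H0) as [e [He Hu]].
    assert (E (Rmin (e/2) t0)).
    { split. split; [apply Rmin_glb; lra| apply Rmin_r].
      intros u Hu'. assert (Hm : Rmin (e/2) t0 <= e/2) by apply Rmin_l.
      assert (Rabs (u - 0) < e) by (rewrite Rabs_right; lra).
      specialize (Hu u H). apply Rabs_def2 in Hu. lra. }
    apply (proj1 HS) in H. assert (0 < Rmin (e/2) t0) by (apply Rmin_glb_lt; lra). lra. }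
  exists S. split; [exact HSpos|]. split; [|exact Hbel].
  destruct (Rle_lt_dec (f S) 0) as [h|h]; [exact h|exfalso].
  assert (HSlt : S < t0). { destruct (Rle_lt_or_eq_dec _ _ HSt) as [h'|h']; auto. subst S. lra. }
  destruct (Hc S (f S) h) as [e [He Hu]].
  set (s' := S + Rmin (e/2) (t0 - S)).
  assert (Hm1 : Rmin (e/2) (t0 - S) <= e/2) by apply Rmin_l.
  assert (Hm2 : Rmin (e/2) (t0 - S) <= t0 - S) by apply Rmin_r.
  assert (Hm3 : 0 < Rmin (e/2) (t0 - S)) by (apply Rmin_glb_lt; lra).
  assert (E s').
  { unfold s'; split; [lra|]. intros u Hu'.
    destruct (Rlt_le_dec u S) as [hu|hu]; [apply Hbel; lra|].
    assert (Rabs (u - S) < e) by (rewrite Rabs_right; lra).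
    specialize (Hu u H). apply Rabs_def2 in Hu. lra. }
  apply (proj1 HS) in H. unfold s' in H. lra.
Qed.
Lemma local_step (y a : R -> R) S d K :
  0 < d -> 0 <= K -> y S = 0 ->
  (forall eps, 0 < eps -> exists e, 0 < e /\ forall u, S < u < S + e -> Rabs (y u) < eps) ->
  (forall u, S < u < S + d -> is_derive y u (a u * y u)) ->
  (forall u, S < u < S + d -> Rabs (a u) <= K) ->
  forall t, S < t < S + d -> y t = 0.
Proof.
  intros Hd HK HyS Hrc Hder Ha t Ht.
  set (E := fun u => y u * y u * exp (- (2 * K) * (u - S))).
  assert (Hmono : forall S', S < S' < t -> E t <= E S').
  { intros S' HS'.
    destruct (MVT_cor2 E (fun c => 2 * (y c * y c) * (a c - K) * exp (- (2 * K) * (c - S))) S' t ltac:(lra))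
      as [c [Hc1 Hc2]].
    { intros c Hc. apply is_derive_Reals. unfold E.
      assert (Hy := Hder c ltac:(lra)).
      auto_derive.
      - repeat split; exists (a c * y c); exact Hy.
      - replace (Derive (fun x => y x) c) with (a c * y c) by (symmetry; apply is_derive_unique; exact Hy). unfold Rminus; ring. }
    assert (Hac := Ha c ltac:(lra)). assert (a c <= K) by (apply Rle_trans with (Rabs (a c)); [apply Rle_abs|exact Hac]).
    assert (0 < exp (- (2 * K) * (c - S))) by apply exp_pos.
    assert (0 <= y c * y c) by nra.
    assert (2 * (y c * y c) * (a c - K) * exp (- (2 * K) * (c - S)) <= 0).
    { assert (0 <= 2 * (y c * y c) * (K - a c)) by nra. nra. }
    nra. }
  destruct (Req_dec (y t) 0) as [h|h]; [exact h|exfalso].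
  assert (HEt : 0 < E t).
  { unfold E. assert (0 < exp (- (2 * K) * (t - S))) by apply exp_pos.
    assert (0 < y t * y t) by (apply Rsqr_pos_lt; exact h). nra. }
  set (eps := Rmin 1 (E t / 2)).
  assert (He1 : eps <= 1) by apply Rmin_l.
  assert (He2 : eps <= E t / 2) by apply Rmin_r.
  assert (He0 : 0 < eps) by (apply Rmin_glb_lt; lra).
  destruct (Hrc eps He0) as [e [He Hu]].
  set (S' := S + Rmin e (t - S) / 2).
  assert (Hm1 : Rmin e (t - S) <= e) by apply Rmin_l.
  assert (Hm2 : Rmin e (t - S) <= t - S) by apply Rmin_r.
  assert (Hm3 : 0 < Rmin e (t - S)) by (apply Rmin_glb_lt; lra).
  assert (HS'1 : S < S' < t) by (unfold S'; lra).
  specialize (Hmono S' HS'1).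
  specialize (Hu S' ltac:(unfold S'; lra)).
  assert (Hex : exp (- (2 * K) * (S' - S)) <= 1).
  { rewrite <- exp_0. assert (0 <= K * (S' - S)) by (apply Rmult_le_pos; lra).
    destruct (Rle_lt_or_eq_dec 0 (K * (S' - S)) H) as [h1|h1].
    - left; apply exp_increasing; lra.
    - right; f_equal; lra. }
  assert (HE' : E S' <= y S' * y S').
  { unfold E. assert (0 < exp (- (2 * K) * (S' - S))) by apply exp_pos.
    assert (0 <= y S' * y S') by nra. nra. }
  assert (Hyy : y S' * y S' < eps).
  { assert (Rabs (y S') * Rabs (y S') < eps * 1).
    { apply Rmult_le_0_lt_compat; try apply Rabs_pos; lra. }
    rewrite <- Rabs_mult, Rmult_1_r in H. apply Rle_lt_trans with (2 := H). apply Rle_abs. }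
  lra.
Qed.

Lemma zero_unique (T : R) (y a : R -> R) :
  y 0 = 0 ->
  (forall eps, 0 < eps -> exists e, 0 < e /\ forall u, 0 < u < 0 + e -> Rabs (y u - 0) < eps) ->
  (forall s, 0 <= s < T -> exists d K, 0 < d /\ 0 <= K /\ forall u, s < u < s + d -> Rabs (a u) <= K) ->
  (forall t, 0 < t < T -> is_derive y t (a t * y t)) ->
  forall t, 0 <= t < T -> y t = 0.
Proof.
  intros Hy0 Hrc0 Hloc Hder t1 Ht1.
  destruct (Rle_lt_or_eq_dec 0 t1 (proj1 Ht1)) as [Ht1p|Ht1p]; [|subst t1; exact Hy0].
  set (E := fun s => 0 <= s <= t1 /\ forall u, 0 <= u <= s -> y u = 0).
  assert (HE0 : E 0). { split; [lra|]. intros u Hu. replace u with 0 by lra. exact Hy0. }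
  assert (Hb : bound E). { exists t1. intros s [Hs _]. lra. }
  destruct (completeness E Hb (ex_intro _ 0 HE0)) as [S HS].
  assert (HS0 : 0 <= S) by (apply (proj1 HS); exact HE0).
  assert (HSt : S <= t1). { apply (proj2 HS). intros s [Hs _]. lra. }
  assert (Hbel : forall t, 0 <= t < S -> y t = 0).
  { intros t Ht. destruct (lub_below E S t HS (proj2 Ht)) as [s [[_ Hs] Hts]]. apply Hs; lra. }
  assert (HyS : y S = 0).
  { destruct (Rle_lt_or_eq_dec 0 S HS0) as [h|h]; [|subst S; exact Hy0].
    destruct (Req_dec (y S) 0) as [h'|h']; [exact h'|exfalso].
    assert (Hp : 0 < Rabs (y S)) by (apply Rabs_pos_lt; exact h').
    destruct (deriv_eps y S _ (Hder S ltac:(lra)) _ Hp) as [e [He Hu]].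
    set (u := S - Rmin e S / 2).
    assert (Hm1 : Rmin e S <= e) by apply Rmin_l.
    assert (Hm2 : Rmin e S <= S) by apply Rmin_r.
    assert (Hm3 : 0 < Rmin e S) by (apply Rmin_glb_lt; lra).
    assert (Rabs (u - S) < e) by (unfold u; rewrite Rabs_left; lra).
    specialize (Hu u H). rewrite (Hbel u ltac:(unfold u; lra)) in Hu.
    rewrite Rminus_0_l, Rabs_Ropp in Hu. lra. }
  assert (HSe : S = t1).
  { destruct (Rle_lt_or_eq_dec S t1 HSt) as [h|h]; [exfalso|exact h].
    destruct (Hloc S ltac:(lra)) as [d1 [K [Hd1 [HK Ha]]]].
    set (d := Rmin d1 (t1 - S)).
    assert (Hm1 : d <= d1) by apply Rmin_l.
    assert (Hm2 : d <= t1 - S) by apply Rmin_r.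
    assert (Hm3 : 0 < d) by (apply Rmin_glb_lt; lra).
    assert (Hrc : forall eps, 0 < eps -> exists e, 0 < e /\ forall u, S < u < S + e -> Rabs (y u) < eps).
    { intros eps He.
      destruct (Rle_lt_or_eq_dec 0 S HS0) as [hs|hs].
      - destruct (deriv_eps y S _ (Hder S ltac:(lra)) _ He) as [e [He' Hu]].
        exists e; split; [exact He'|]. intros u Hu'.
        specialize (Hu u ltac:(rewrite Rabs_right; lra)). rewrite HyS, Rminus_0_r in Hu. exact Hu.
      - subst S. destruct (Hrc0 eps He) as [e [He' Hu]]. exists e; split; [exact He'|].
        intros u Hu'. specialize (Hu u Hu'). rewrite Rminus_0_r in Hu. exact Hu. }
    assert (Hloc0 : forall t, S < t < S + d -> y t = 0).
    { apply (local_step y a S d K Hm3 HK HyS Hrc).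
      - intros u Hu; apply Hder; lra.
      - intros u Hu; apply Ha; lra. }
    assert (E (S + d / 2)).
    { split; [lra|]. intros u Hu.
      destruct (Rlt_le_dec u S) as [hu|hu]; [apply Hbel; lra|].
      destruct (Rle_lt_or_eq_dec S u hu) as [hu'|hu']; [apply Hloc0; lra|subst u; exact HyS]. }
    apply (proj1 HS) in H. lra. }
  subst S. exact HyS.
Qed.
Lemma angle a b : a * a + b * b = 1 -> exists t, 0 <= t /\ cos t = a /\ sin t = b.
Proof.
  intros H.
  assert (Ha : -1 <= a <= 1) by nra.
  assert (Hs : sin (acos a) = Rabs b).
  { rewrite sin_acos by exact Ha. rewrite <- sqrt_Rsqr_abs. f_equal. unfold Rsqr. lra. }
  destruct (acos_bound a) as [h1 h2].
  destruct (Rle_lt_dec 0 b) as [hb|hb].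
  - exists (acos a). split; [lra|]. split; [apply cos_acos; exact Ha|]. rewrite Hs, Rabs_right; lra.
  - exists (2 * PI - acos a). split; [pose proof PI_RGT_0; lra|].
    unfold Rminus. rewrite cos_plus, sin_plus, cos_neg, sin_neg, cos_2PI, sin_2PI, cos_acos by exact Ha.
    rewrite Hs, Rabs_left by lra. split; ring.
Qed.

Lemma fl_plus {F} {FF : Filter F} (f g : R -> R) lf lg : filterlim f F (locally lf) -> filterlim g F (locally lg) -> filterlim (fun t => f t + g t) F (locally (lf + lg)).
Proof. intros. eapply filterlim_comp_2; eauto. exact (filterlim_plus (V:=R_NormedModule) lf lg). Qed.
Lemma fl_mult {F} {FF : Filter F} (f g : R -> R) lf lg : filterlim f F (locally lf) -> filterlim g F (locally lg) -> filterlim (fun t => f t * g t) F (locally (lf * lg)).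
Proof. intros. eapply filterlim_comp_2; eauto. exact (filterlim_mult (K:=R_AbsRing) lf lg). Qed.
Lemma fl_const {F} {FF : Filter F} (c : R) : filterlim (fun _ : R => c) F (locally c).
Proof. apply filterlim_const. Qed.

Lemma backward (x1 x2 : R) : 1 - 2 * x2 <= x1 ^ 2 -> blows_up_in_finite_time x1 x2.
Proof.
  intros Hc. replace (x1 ^ 2) with (x1 * x1) in Hc by ring.
  set (R0 := sqrt (x1 * x1 + x2 * x2)).
  assert (Hpos : 0 < x1 * x1 + x2 * x2) by nra.
  assert (HR0 : 0 < R0) by (apply sqrt_lt_R0; exact Hpos).
  assert (HR2 : R0 * R0 = x1 * x1 + x2 * x2) by (apply sqrt_sqrt; lra).
  destruct (angle (- x2 / R0) (- x1 / R0)) as [t0 [Ht0 [Hcos Hsin]]].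
  { replace (- x2 / R0 * (- x2 / R0) + - x1 / R0 * (- x1 / R0)) with ((x1 * x1 + x2 * x2) / (R0 * R0)) by (field; lra). rewrite <- HR2. field. lra. }
  set (p := fun t => 1 - x2 + x2 * cos t + x1 * sin t).
  set (dp := fun t => - x2 * sin t + x1 * cos t).
  assert (Hpd : forall t, is_derive p t (dp t)).
  { intros t. unfold p, dp. auto_derive; [exact I|ring]. }
  assert (Hp0 : p 0 = 1) by (unfold p; rewrite cos_0, sin_0; ring).
  assert (Hpt0 : p t0 <= 0).
  { unfold p. rewrite Hcos, Hsin.
    replace (1 - x2 + x2 * (- x2 / R0) + x1 * (- x1 / R0)) with (1 - x2 - (x1 * x1 + x2 * x2) / R0) by (field; lra).
    rewrite <- HR2. replace (R0 * R0 / R0) with R0 by (field; lra).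
    assert ((1 - x2) * (1 - x2) <= R0 * R0) by nra. nra. }
  assert (Ht0p : 0 < t0).
  { destruct (Rle_lt_or_eq_dec 0 t0 Ht0) as [h|h]; [exact h|subst t0; lra]. }
  destruct (first_zero p t0) as [T [HT [HpT Hpp]]]; auto.
  { intros x. exact (deriv_eps p x _ (Hpd x)). }
  { lra. }
  exists T; split; [exact HT|].
  set (v1 := fun t => dp t / p t).
  set (v2 := fun t => 1 - (1 - x2) / p t).
  exists v1, v2. split.
  - assert (Hv1c : continuous v1 0).
    { apply (ex_derive_continuous (V:=R_NormedModule)). unfold v1, p, dp. auto_derive.
      fold (p 0). rewrite Hp0. lra. }
    assert (Hv2c : continuous v2 0).
    { apply (ex_derive_continuous (V:=R_NormedModule)). unfold v2, p. auto_derive.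
      fold (p 0). rewrite Hp0. lra. }
    assert (Hv10 : v1 0 = x1) by (unfold v1, dp; rewrite Hp0, cos_0, sin_0; field).
    assert (Hv20 : v2 0 = x2) by (unfold v2; rewrite Hp0; field).
    split; [exact Hv10|]. split; [exact Hv20|].
    split; [rewrite <- Hv10; apply cont_rc; exact Hv1c|].
    split; [rewrite <- Hv20; apply cont_rc; exact Hv2c|].
    intros t Ht. assert (Hpt : 0 < p t) by (apply Hpp; lra).
    split.
    + unfold v1, v2. unfold p in Hpt |- *. unfold dp. auto_derive; [lra|]. field. lra.
    + unfold v1, v2. unfold p in Hpt |- *. unfold dp. auto_derive; [lra|]. field. lra.
  - intros [M HM].
    set (g := fun t => p t * exp (M * t)).
    destruct (MVT_cor2 g (fun t => (dp t + M * p t) * exp (M * t)) 0 T HT) as [c [Hc1 Hc2]].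
    { intros c _. apply is_derive_Reals. unfold g, p, dp. auto_derive; [exact I|ring]. }
    assert (Hpc : 0 < p c) by (apply Hpp; lra).
    specialize (HM c ltac:(lra)).
    assert (Hv : Rabs (v1 c) <= M) by (pose proof (Rabs_pos (v2 c)); lra).
    assert (Hv' : - M <= v1 c) by (pose proof (Rle_abs (- v1 c)) as HH; rewrite Rabs_Ropp in HH; lra).
    assert (Hdp : dp c = v1 c * p c) by (unfold v1; field; lra).
    assert (Hg0 : g 0 = 1) by (unfold g; rewrite Hp0, Rmult_0_r, exp_0; ring).
    assert (HgT : g T <= 0).
    { unfold g. pose proof (exp_pos (M * T)). nra. }
    assert (Hd : 0 <= (dp c + M * p c) * exp (M * c) * (T - 0)).
    { rewrite Hdp. pose proof (exp_pos (M * c)).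
      apply Rmult_le_pos; [|lra]. apply Rmult_le_pos; [|lra].
      replace (v1 c * p c + M * p c) with (p c * (v1 c + M)) by ring. apply Rmult_le_pos; lra. }
    lra.
Qed.

Lemma forward (x1 x2 : R) : blows_up_in_finite_time x1 x2 -> 1 - 2 * x2 <= x1 ^ 2.
Proof.
  intros [T [HT [v1 [v2 [[H10 [H20 [Hl1 [Hl2 Hd]]]] Hub]]]]].
  apply Rnot_lt_le; intro Hlt. apply Hub.
  replace (x1 ^ 2) with (x1 * x1) in Hlt by ring.
  assert (Hw0 : 0 < 1 - x2) by nra.
  set (C := (x1 * x1 + 2 * x2 - 1) / ((1 - x2) * (1 - x2))).
  assert (HC : C < 0).
  { unfold C. unfold Rdiv. apply Rmult_neg_pos; [lra|]. apply Rinv_0_lt_compat; nra. }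
  set (y := fun t => v1 t * v1 t + 2 * v2 t - 1 - C * ((1 - v2 t) * (1 - v2 t))).
  set (a := fun t => -2 * v1 t).
  assert (Hy0 : y 0 = 0) by (unfold y; rewrite H10, H20; unfold C; field; lra).
  assert (Hyl : filterlim y (at_right 0) (locally 0)).
  { cut (filterlim y (at_right 0) (locally (y 0))); [rewrite Hy0; auto|].
    unfold y. rewrite H10, H20.
    apply (filterlim_ext (fun t => v1 t * v1 t + 2 * v2 t + (-1) + (-C) * ((1 + (-1) * v2 t) * (1 + (-1) * v2 t)))).
    { intros; ring. }
    replace (x1 * x1 + 2 * x2 - 1 - C * ((1 - x2) * (1 - x2))) with
      (x1 * x1 + 2 * x2 + (-1) + (-C) * ((1 + (-1) * x2) * (1 + (-1) * x2))) by ring.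
    repeat first [apply fl_plus | apply fl_mult | apply fl_const | exact Hl1 | exact Hl2]. }
  assert (Hzero : forall t, 0 <= t < T -> y t = 0).
  { apply (zero_unique T y a Hy0).
    - intros eps He. exact (rc_eps y 0 0 Hyl eps He).
    - intros s Hs. destruct (Rle_lt_or_eq_dec 0 s (proj1 Hs)) as [h|h].
      + destruct (deriv_eps v1 s _ (proj1 (Hd s ltac:(lra))) 1 ltac:(lra)) as [e [He Hu]].
        exists e, (2 * (Rabs (v1 s) + 1)). split; [exact He|]. split; [pose proof (Rabs_pos (v1 s)); lra|].
        intros u Hu'. specialize (Hu u ltac:(rewrite Rabs_right; lra)).
        unfold a. rewrite Rabs_mult. replace (Rabs (-2)) with 2 by (rewrite Rabs_left; lra).
        pose proof (Rabs_triang_inv (v1 u) (v1 s)). lra.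
      + subst s. destruct (rc_eps v1 0 x1 Hl1 1 ltac:(lra)) as [e [He Hu]].
        exists e, (2 * (Rabs x1 + 1)). split; [exact He|]. split; [pose proof (Rabs_pos x1); lra|].
        intros u Hu'. specialize (Hu u Hu').
        unfold a. rewrite Rabs_mult. replace (Rabs (-2)) with 2 by (rewrite Rabs_left; lra).
        pose proof (Rabs_triang_inv (v1 u) x1). lra.
    - intros t Ht. destruct (Hd t Ht) as [D1 D2]. unfold y, a.
      auto_derive.
      + repeat split; first [exists (- v1 t ^ 2 - v2 t); exact D1 | exists (- (v1 t * v2 t) + v1 t); exact D2].
      + replace (Derive (fun x => v1 x) t) with (- v1 t ^ 2 - v2 t) by (symmetry; apply is_derive_unique; exact D1).
        replace (Derive (fun x => v2 x) t) with (- (v1 t * v2 t) + v1 t) by (symmetry; apply is_derive_unique; exact D2). ring. }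
  set (c := - C).
  exists (2 + 6 / c). intros t Ht.
  specialize (Hzero t Ht). unfold y in Hzero.
  assert (Hc : 0 < c) by (unfold c; lra).
  set (w := 1 - v2 t).
  assert (Hrel : v1 t * v1 t + 1 - 2 * w + c * (w * w) = 0) by (unfold w, c; lra).
  assert (Hwp : 0 < w) by nra.
  assert (Hwb : c * w < 2) by nra.
  assert (Hw2 : w < 2 / c) by (apply (Rmult_lt_reg_l c); [lra|]; field_simplify; lra).
  assert (Hv1 : v1 t * v1 t < 4 / c) by (unfold Rdiv; nra).
  assert (Ha1 : Rabs (v1 t) <= 1 + v1 t * v1 t).
  { apply Rabs_le. split; nra. }
  assert (Ha2 : Rabs (v2 t) <= 1 + w).
  { apply Rabs_le. unfold w in Hwp |- *. lra. }
  assert (6 / c = 4 / c + 2 / c) by (field; lra). lra.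
Qed.

Theorem mainTheorem15 (x1 x2 : R) :
  blows_up_in_finite_time x1 x2 <-> 1 - 2 * x2 <= x1 ^ 2.
Proof. split; [apply forward | apply backward]. Qed.
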